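(* Let $X$ be a Fréchet space, $(T(t))_{t\geqslant0}$ an exponentially equicontinuous $C_0$-semigroup on $X$, and let $\Gamma$ be a fundamental system of seminorms for $X$ for which there exist $\omega\in\mathbb{R}$ and $M\geqslant1$ with $q(T(t)x)\leqslant Me^{\omega t}q(x)$ for all $q\in\Gamma$, $t\geqslant0$, $x\in X$. Then for every $t_0>0$, \[\omega_{0,\Gamma}(T)=\inf_{t>0}\tfrac{1}{t}\log\|T(t)\|_\Gamma=\lim_{t\to\infty}\tfrac1t\log\|T(t)\|_\Gamma=\tfrac{1}{t_0}\log\Big(\lim_{n\to\infty}\|T(t_0)^n\|_\Gamma^{1/n}\Big).\]
   Context: A Fréchet space is a complete metrizable locally convex space; a fundamental system of seminorms is a set of continuous seminorms generating the topology. A $C_0$-semigroup is a family $(T(t))_{t\geqslant0}$ of continuous linear operators on $X$ with $T(0)=\mathrm{id}_X$, $T(t+s)=T(t)T(s)$, and $t\mapsto T(t)x$ continuous for every $x$; it is exponentially equicontinuous if for some $\omega\in\mathbb{R}$ the family $\{e^{-\omega t}T(t)\}_{t\geqslant0}$ is equicontinuous. For $S\in L(X)$ put $\|S\|_\Gamma=\sup_{q\in\Gamma}\sup_{x\in X,\,q(x)\leqslant1}q(Sx)$. Define \[\omega_{0,\Gamma}(T)=\inf\{\omega\in\mathbb{R}: \exists M\geqslant1\ \forall q\in\Gamma,\,t\geqslant0,\,x\in X:\ q(T(t)x)\leqslant Me^{\omega t}q(x)\}.\] *)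

(* Defs.v *)
From HB Require Import structures.
From mathcomp Require Import all_boot all_order all_algebra.
From mathcomp Require Import all_classical all_reals all_analysis.
Set Implicit Arguments. Unset Strict Implicit. Unset Printing Implicit Defensive.
Import Order.TTheory GRing.Theory Num.Theory numFieldNormedType.Exports.
Local Open Scope classical_set_scope.
Local Open Scope ring_scope.

Section Defs.
Context {R : realType} {X : tvsType R}.

(** Fréchet space: a (locally convex) tvs which is complete (every Cauchy
    proper filter converges) and metrizable (Hausdorff with a countable
    neighbourhood base at 0; Birkhoff-Kakutani). *)
Definition frechet_space : Prop :=
  [/\ hausdorff_space X,
      (exists B : nat -> set X, (forall n, nbhs (0 : X) (B n)) /\
         (forall U, nbhs (0 : X) U -> exists n, B n `<=` U)) &
      (forall F : set_system X, ProperFilter F -> @cauchy X F -> exists x : X, F --> x)].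

Definition seminorm (p : X -> R) : Prop :=
  (forall x y, p (x + y) <= p x + p y) /\ (forall (k : R) x, p (k *: x) = `|k| * p x).

Definition fundamental_system (Gamma : set (X -> R)) : Prop :=
  (forall q, Gamma q -> seminorm q /\ continuous q) /\
  (forall U, nbhs (0 : X) U ->
     exists (n : nat) (qs : 'I_n -> X -> R) (e : R),
       [/\ (forall i, Gamma (qs i)), 0 < e &
        [set x | forall i, qs i x < e] `<=` U]).

(** C0-semigroup (T t only matters for t >= 0). *)
Definition C0_semigroup (T : R -> X -> X) : Prop :=
  [/\ (forall t, 0 <= t -> (forall (a : R) x y, T t (a *: x + y) = a *: T t x + T t y) /\ continuous (T t)),
      T 0 = id,
      (forall t s, 0 <= t -> 0 <= s -> T (t + s) = T t \o T s) &
      (forall x, {within `[0, +oo[, continuous (fun t => T t x)})].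

(** exponential equicontinuity: {e^{-wt} T(t)}_{t>=0} is equicontinuous
    (same formulation as the library's [equicontinuous], w.r.t. the uniform
    structure of X). *)
Definition exp_equicontinuous (T : R -> X -> X) : Prop :=
  exists w : R, forall (x : X) (E : set (X * X)), entourage E ->
    \forall y \near x, forall t : R, 0 <= t ->
       E (expR (- w * t) *: T t x, expR (- w * t) *: T t y).

Definition normG (Gamma : set (X -> R)) (S : X -> X) : \bar R :=
  ereal_sup [set y | exists q x, [/\ Gamma q, q x <= 1 & y = (q (S x))%:E]].

Definition omega0 (Gamma : set (X -> R)) (T : R -> X -> X) : \bar R :=
  ereal_inf [set w%:E | w in [set w : R | exists2 M : R, 1 <= M &
     forall q t x, Gamma q -> 0 <= t -> q (T t x) <= M * expR (w * t) * q x]].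

End Defs.

(* Main.v *)
Require Import Defs.
From HB Require Import structures.
From mathcomp Require Import all_boot all_order all_algebra.
From mathcomp Require Import all_classical all_reals all_analysis ring lra.
Import Order.TTheory GRing.Theory Num.Theory numFieldNormedType.Exports.
Local Open Scope classical_set_scope.
Local Open Scope ring_scope.
Set Implicit Arguments. Unset Strict Implicit.

Section Aux.
Context {R : realType} {X : tvsType R}.

Lemma sn_ge0 (q : X -> R) x : seminorm q -> 0 <= q x.
Proof.
case=> hD hZ.
have h0 : q 0 = 0 by rewrite -(scale0r x) hZ normr0 mul0r.
have hN : q (- x) = q x by rewrite -scaleN1r hZ normrN normr1 mul1r.
have := hD x (- x); rewrite subrr h0 hN => h.
by rewrite -(pmulr_rge0 _ (ltr0Sn R 1)) mulr2n mulrDl mul1r.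
Qed.

Lemma sn0 (q : X -> R) : seminorm q -> q 0 = 0.
Proof. by case=> _ hZ; rewrite -(scale0r (0:X)) hZ normr0 mul0r. Qed.

Lemma normG_ub (Gamma : set (X -> R)) (S : X -> X) q x :
  Gamma q -> q x <= 1 -> ((q (S x))%:E <= normG Gamma S)%E.
Proof. by move=> Gq qx; apply: ereal_sup_ubound; exists q, x. Qed.

Lemma normG_le (Gamma : set (X -> R)) (S : X -> X) c :
  (forall q x, Gamma q -> q x <= 1 -> q (S x) <= c) -> (normG Gamma S <= c%:E)%E.
Proof.
by move=> H; apply: ge_ereal_sup => _ [q [x [Gq qx ->]]]; rewrite lee_fin H.
Qed.

Lemma normG_cases (Gamma : set (X -> R)) (S : X -> X) :
  (forall q, Gamma q -> seminorm q) ->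
  normG Gamma S = -oo%E \/ (0 <= normG Gamma S)%E.
Proof.
move=> HG; case: (pselect (exists q, Gamma q)) => [[q Gq]|nG].
  right; apply: (le_trans _ (@normG_ub _ S q 0 Gq _)).
    by rewrite lee_fin; apply: sn_ge0; apply: HG.
  by rewrite sn0 ?ler01 //; apply: HG.
left; rewrite /normG; suff -> : [set y | exists q x, [/\ Gamma q, q x <= 1 & y = (q (S x))%:E]] = set0 by rewrite ereal_sup0.
by apply/seteqP; split => // y [q [x [Gq _ _]]]; apply: nG; exists q.
Qed.

Lemma key_bound (Gamma : set (X -> R)) (S : X -> X) c :
  (forall q, Gamma q -> seminorm q) ->
  (forall (a : R) x, S (a *: x) = a *: S x) ->
  0 <= c -> (normG Gamma S <= c%:E)%E ->
  forall q y, Gamma q -> q (S y) <= c * q y.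
Proof.
move=> HG HS c0 Hc q y Gq.
have qy0 := sn_ge0 y (HG _ Gq).
apply/ler_addgt0Pr => e e0.
pose k := q y + e / (c + 1).
have c1 : 0 < c + 1 by rewrite ltr_wpDl.
have k0 : 0 < k by rewrite /k ltr_wpDl // divr_gt0.
have hy' : q (k^-1 *: y) <= 1.
  rewrite (HG _ Gq).2 ger0_norm; last by rewrite invr_ge0 ltW.
  by rewrite mulrC ler_pdivrMr // mul1r /k lerDl divr_ge0 // ltW.
have := normG_ub S Gq hy'; move/le_trans/(_ Hc); rewrite lee_fin HS (HG _ Gq).2.
rewrite ger0_norm; last by rewrite invr_ge0 ltW.
rewrite mulrC ler_pdivrMr // => h.
apply: (le_trans h); rewrite /k mulrDr lerD2l mulrA ler_pdivrMr //.
by rewrite mulrDr mulr1 mulrC lerDl ltW.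
Qed.


Section Main.
Variables (T : R -> X -> X) (Gamma : set (X -> R)).
Hypothesis HG : forall q, Gamma q -> seminorm q.
Hypothesis Hlin : forall t, 0 <= t -> forall (a : R) x y, T t (a *: x + y) = a *: T t x + T t y.
Hypothesis Hsg : forall t s, 0 <= t -> 0 <= s -> T (t + s) = T t \o T s.
Variables (w0 M0 : R).
Hypothesis HM0 : 1 <= M0.
Hypothesis Hb0 : forall q t x, Gamma q -> 0 <= t -> q (T t x) <= M0 * expR (w0 * t) * q x.

Local Notation N t := (normG Gamma (T t)).
Local Notation f t := (lne (N t) * (t^-1)%:E)%E.
Local Notation Sw := [set w : R | exists2 M : R, 1 <= M & forall q t x, Gamma q -> 0 <= t -> q (T t x) <= M * expR (w * t) * q x].

Lemma Tscale t : 0 <= t -> forall (a : R) x, T t (a *: x) = a *: T t x.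
Proof.
move=> t0 a x.
have h0 : T t 0 = 0.
  have h := Hlin t0 1 0 0; rewrite !scale1r addr0 in h.
  by rewrite -[LHS](addrK (T t 0)) -h subrr.
by have := Hlin t0 a x 0; rewrite addr0 h0 addr0.
Qed.

Lemma N_le w M t : 1 <= M ->
  (forall q t x, Gamma q -> 0 <= t -> q (T t x) <= M * expR (w * t) * q x) ->
  0 <= t -> (N t <= (M * expR (w * t))%:E)%E.
Proof.
move=> M1 Hw t0; apply: normG_le => q x Gq qx.
apply: le_trans (Hw q t x Gq t0) _.
rewrite -[X in _ <= X]mulr1 ler_wpM2l // mulr_ge0 // ?expR_ge0 //.
exact: le_trans ler01 M1.
Qed.

Lemma lne_le (x : \bar R) (r : R) : 0 < r -> (x <= r%:E)%E -> (lne x <= (ln r)%:E)%E.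
Proof.
move=> r0; case: x => [s||] //=; rewrite /lne; last by move=> _; exact: leNye.
have [s0|s0] := leP s 0; first by move=> _; exact: leNye.
by rewrite !lee_fin => h; rewrite ler_ln // posrE.
Qed.

Lemma lne_lt (x : \bar R) (r : R) : (lne x < r%:E)%E -> (x < (expR r)%:E)%E.
Proof.
case: x => [s||] //=; rewrite /lne; last by move=> _; exact: ltNyr.
have [s0 _|sp] := leP s 0.
  by rewrite lte_fin (le_lt_trans s0) ?expR_gt0.
by rewrite !lte_fin => h; rewrite -(lnK sp) ltr_expR.
Qed.

Lemma Bbound w M t : 1 <= M ->
  (forall q t x, Gamma q -> 0 <= t -> q (T t x) <= M * expR (w * t) * q x) ->
  0 < t -> (f t <= (w + ln M / t)%:E)%E.
Proof.
move=> M1 Hw t0.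
have M0' : 0 < M by apply: lt_le_trans ltr01 M1.
have h := lne_le (mulr_gt0 M0' (expR_gt0 _)) (N_le M1 Hw (ltW t0)).
rewrite lnM ?posrE ?expR_gt0 // expRK in h.
apply: le_trans (lee_wpmul2r _ h) _; first by rewrite lee_fin invr_ge0 ltW.
by rewrite -EFinM lee_fin mulrDl mulfK ?gt_eqF // addrC.
Qed.

Lemma A_mem t w : 0 < t -> (f t < w%:E)%E -> Sw w.
Proof.
move=> t0 h.
have ht : t%:E \is a fin_num by [].
have h1 : (lne (N t) < (w * t)%:E)%E.
  move: h; rewrite -(lte_pmul2r ht) ?lte_fin //.
  by rewrite -muleA -EFinM mulVf ?gt_eqF // mule1 -EFinM.
have hN := ltW (lne_lt h1).
have hk := key_bound (HG) (Tscale (ltW t0)) (expR_ge0 _) hN.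
exists (M0 * expR (`|w0 - w| * t)).
  apply: mulr_ege1 => //; apply: le_trans (expR_ge1Dx _).
  by rewrite lerDl mulr_ge0 // ltW.
move=> q s x Gq s0.
have [n hn] : exists n : nat, s < n%:R * t.
  exists (Num.bound (s / t)); rewrite -ltr_pdivrMr //.
  by apply: archi_boundP; rewrite divr_ge0 // ltW.
elim: n s s0 hn x => [|n IH] s s0 hn x.
  by rewrite mul0r ltNge s0 in hn.
have qx0 : 0 <= q x by apply: sn_ge0; apply: HG.
case: (ltP s t) => hst.
  apply: le_trans (Hb0 x Gq s0) _.
  have -> : M0 * expR (`|w0 - w| * t) * expR (w * s) =
            M0 * expR (`|w0 - w| * t + w * s) by rewrite expRD mulrA.
  rewrite ler_wpM2r // ler_wpM2l ?(le_trans ler01) //.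
  rewrite ler_expR -lerBlDr -mulrBl.
  apply: le_trans (ler_wpM2r s0 (ler_norm _)) _.
  by rewrite ler_wpM2l // ltW.
have e : s = t + (s - t) by rewrite addrC subrK.
rewrite {1}e Hsg ?subr_ge0 ?(ltW t0) //=.
apply: le_trans (hk q _ Gq) _.
have hn' : s - t < n%:R * t.
  by rewrite ltrBlDl; move: hn; rewrite -natr1 mulrDl mul1r addrC.
have IH' := IH (s - t) (ltac:(by rewrite subr_ge0)) hn' x.
apply: le_trans (ler_wpM2l (expR_ge0 _) IH') _.
have -> : expR (w * s) = expR (w * t) * expR (w * (s - t)).
  by rewrite -expRD -mulrDr -e.
rewrite le_eqVlt; apply/orP; left; apply/eqP; ring.
Qed.


Lemma Alow t : 0 < t -> (omega0 Gamma T <= f t)%E.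
Proof.
move=> t0; case E: (f t) => [s||].
- apply/lee_addgt0Pr => e e0; apply: ereal_inf_lbound; exists (s + e) => //.
  by apply: (A_mem t0); rewrite E lte_fin ltrDl.
- exact: leey.
- have H r : (omega0 Gamma T <= r%:E)%E.
    by apply: ereal_inf_lbound; exists r => //; apply: (A_mem t0); rewrite E ltNyr.
  move: H; case: (omega0 Gamma T) => [a||] // H.
  by have := H (a - 1)%R; rewrite lee_fin => h; exfalso; lra.
  by have := H 0%R.
Qed.

Lemma lim0 w M : 1 <= M ->
  (forall q t x, Gamma q -> 0 <= t -> q (T t x) <= M * expR (w * t) * q x) ->
  forall d, 0 < d -> \forall t \near +oo, (f t <= (w + d)%:E)%E.
Proof.
move=> M1 Hw d d0.
near=> t.
have t0 : 0 < t by near: t; apply: nbhs_pinfty_gt; rewrite num_real.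
apply: le_trans (Bbound M1 Hw t0) _; rewrite lee_fin lerD2l ler_pdivrMr //.
rewrite mulrC -ler_pdivrMr //.
Unshelve. all: end_near. Qed.

Lemma flim : (exists (w M : R), 1 <= M /\
     forall q t x, Gamma q -> 0 <= t -> q (T t x) <= M * expR (w * t) * q x) ->
  f t @[t --> +oo] --> omega0 Gamma T.
Proof.
move=> [w1 [M1 [HM1 Hw1]]].
have Sw1 : (omega0 Gamma T <= w1%:E)%E.
  by apply: ereal_inf_lbound; exists w1 => //; exists M1.
have Al := Alow.
move: Sw1 Al; case E: (omega0 Gamma T) => [a||] // Sw1 Al.
- apply/fine_cvgP; split.
    near=> t.
    have t0 : 0 < t by near: t; apply: nbhs_pinfty_gt; rewrite num_real.
    rewrite fin_numElt (lt_le_trans (ltNyr a) (Al _ t0)) /=.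
    apply: le_lt_trans (Bbound HM1 Hw1 t0) _; exact: ltry.
  apply/cvgrPdist_lt => e e0.
  have : (omega0 Gamma T < (a + e)%:E)%E by rewrite E lte_fin ltrDl.
  move=> /ereal_inf_lt [_ [w [M HM Hw] <-]]; rewrite lte_fin => hw.
  have d0 : 0 < (a + e - w) / 2 by rewrite divr_gt0 // subr_gt0.
  have L0 := lim0 HM Hw d0.
  near=> t.
  have t0 : 0 < t by near: t; apply: nbhs_pinfty_gt; rewrite num_real.
  have h1 := Al _ t0.
  have h2 : (f t <= (w + (a + e - w) / 2)%:E)%E by near: t.
  rewrite /=; move: h1 h2; case: (f t) => [g||] //=; rewrite !lee_fin => h1 h2.
  rewrite ltr_distl; apply/andP; split; lra.
- apply/cvgeNyPle => A.
  have : (omega0 Gamma T < A%:E)%E by rewrite E ltNyr.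
  move=> /ereal_inf_lt [_ [w [M HM Hw] <-]]; rewrite lte_fin => hw.
  have d0 : 0 < A - w by rewrite subr_gt0.
  have L0 := lim0 HM Hw d0.
  near=> t.
  have h2 : (f t <= (w + (A - w))%:E)%E by near: t.
  by move: h2; rewrite addrC subrK.
Unshelve. all: end_near. Qed.

End Main.

Lemma expeR_cvg {I : Type} (F : set_system I) {FF : ProperFilter F}
  (u : I -> \bar R) (l : \bar R) :
  l != +oo%E -> u @ F --> l -> (fun n => expeR (u n)) @ F --> expeR l.
Proof.
case: l => [a| |] // _.
- move=> /fine_cvgP [ufin ucv]; apply/fine_cvgP; split.
    by apply: filterS ufin => n; case: (u n).
  have E : {near F, (expR \o (fine \o u)) =1 (fine \o (fun n => expeR (u n)))}.
    by apply: filterS ufin => n /=; case: (u n).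
  apply: cvg_trans (near_eq_cvg E) _.
  apply: cvg_comp ucv _; exact: continuous_expR.
- move=> /cvgeNyPlt uc; apply/fine_cvgP; split.
    by apply: filterS (uc 0%R) => n; case: (u n).
  apply/cvgrPdist_lt => e e0.
  apply: filterS (uc (ln e)) => n /=; case: (u n) => [r||] //=.
  + rewrite lte_fin sub0r normrN ger0_norm ?expR_ge0 // => h.
    by rewrite -(lnK e0) ltr_expR.
  + by rewrite subr0 normr0.
Qed.

Lemma poweR_lne (x : \bar R) (r : R) : (x = -oo%E \/ (0 <= x)%E) -> 0 < r ->
  (x `^ r = expeR (r%:E * lne x))%E.
Proof.
move=> hx r0; case: x hx => [s| |] hx.
- have s0 : 0 <= s by case: hx => // ; rewrite lee_fin.
  have [->|sp] := eqVneq s 0.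
    rewrite poweR_EFin powR0 ?gt_eqF // le0_lneNy //.
    by rewrite mulrNy gtr0_sg // mul1e.
  have sp' : 0 < s by rewrite lt_def sp.
  by rewrite lne_EFin // poweR_EFin /powR (negbTE sp).
- by rewrite poweRyr ?gt_eqF //= mulry gtr0_sg // mul1e.
- by rewrite poweRNyr ?gt_eqF //= mulrNy gtr0_sg // mul1e.
Qed.

End Aux.

Theorem proposition2p4 (R : realType) (X : tvsType R) (T : R -> X -> X)
  (Gamma : set (X -> R)) :
  frechet_space (X := X) ->
  C0_semigroup T -> exp_equicontinuous T ->
  fundamental_system Gamma ->
  (exists (w M : R), 1 <= M /\
     forall q t x, Gamma q -> 0 <= t -> q (T t x) <= M * expR (w * t) * q x) ->
  forall t0 : R, 0 < t0 ->
  [/\ omega0 Gamma T =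
        ereal_inf [set (lne (normG Gamma (T t)) * (t^-1)%:E)%E | t in [set t : R | 0 < t]],
      (lne (normG Gamma (T t)) * (t^-1)%:E)%E @[t --> +oo] --> omega0 Gamma T &
      exists L : \bar R,
        (normG Gamma (iter n (T t0)) `^ (n%:R^-1))%E @[n --> \oo] --> L /\
        omega0 Gamma T = (lne L * (t0^-1)%:E)%E].
Proof.
move=> _ [HL HT0 Hsg _] _ [HGc _] Hw t0 t0pos.
have HG : forall q, Gamma q -> seminorm q by move=> q /HGc [].
have Hlin : forall t, 0 <= t -> forall (a : R) x y, T t (a *: x + y) = a *: T t x + T t y.
  by move=> t tt; case: (HL t tt).
case: (Hw) => w0 [M0 [HM0 Hb0]].
have fl : (lne (normG Gamma (T t)) * (t^-1)%:E)%E @[t --> +oo] --> omega0 Gamma T.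
  exact: (flim HG Hlin Hsg HM0 Hb0).
have Ow : (omega0 Gamma T <= w0%:E)%E.
  by apply: ereal_inf_lbound; exists w0 => //; exists M0.
split => //.
- apply/eqP; rewrite eq_le; apply/andP; split.
    apply: le_ereal_inf_tmp => _ [t tpos <-].
    exact: (Alow HG Hlin Hsg HM0 Hb0).
  apply: (cvge_ge _ fl); near=> t; apply: ereal_inf_lbound; exists t => //.
  by near: t; apply: nbhs_pinfty_gt; rewrite num_real.
- exists (expeR (t0%:E * omega0 Gamma T)); split; last first.
    by rewrite expeRK muleC muleA -EFinM mulVf ?gt_eqF // mul1e.
  have iterT n : iter n (T t0) = T (n%:R * t0).
    elim: n => [|n IH]; first by rewrite mul0r HT0.
    apply: funext => x; rewrite iterS IH -natr1 mulrDl mul1r addrC Hsg //.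
    exact: ltW.
    by rewrite mulr_ge0 // ltW.
  pose f := fun t : R => (lne (normG Gamma (T t)) * (t^-1)%:E)%E.
  have E : {near \oo, (fun n : nat => expeR (t0%:E * f (n%:R * t0)%R)%E)
              =1 (fun n : nat => normG Gamma (iter n (T t0)) `^ (n%:R^-1)%R)%E}.
    near=> n.
    have n0 : (0 < n)%N by near: n; exact: nbhs_infty_gt.
    rewrite /= /f iterT poweR_lne; last by rewrite invr_gt0 ltr0n.
      congr expeR; rewrite muleCA -EFinM muleC; congr (_ * _)%E; congr EFin.
      by rewrite invfM mulrCA divff ?mulr1 // gt_eqF.
    exact: normG_cases.
  apply: cvg_trans (near_eq_cvg E) _.
  apply: expeR_cvg.
    by move: Ow; case: (omega0 Gamma T) => [a||] //= _; rewrite mulrNy gtr0_sg // mul1e.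
  have g : (fun n : nat => n%:R * t0) @ \oo --> +oo.
    apply/cvgryPge => A; near=> n.
    apply: le_trans (ler_norm A) _; rewrite -ler_pdivrMr //.
    apply: le_trans (ltW (archi_boundP _)) _; first by rewrite divr_ge0 // ltW.
    by rewrite ler_nat; near: n; exact: nbhs_infty_ge.
  have h1 := cvg_comp _ _ g fl.
  apply: cvg_comp h1 _; exact: mule_continuous.
Unshelve. all: end_near. Qed.
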